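(* Let $E$ be a separable real Banach space and $g$ a linear isometric automorphism of $E$ with $g\neq\mathrm{id}$. Then there exist $x\in E$ and $\lambda\in E^*$ such that $\lambda$ norms $x$ but does not norm $gx$, i.e., $\|\lambda\|=\|x\|=1$, $\lambda(x)=1$ and $\lambda(gx)<1$. *)

(* Defs.v *)
From Stdlib Require Import Reals.
Open Scope R_scope.

Record NormedSpace := {
  carrier :> Type;
  vzero : carrier;
  vadd : carrier -> carrier -> carrier;
  vopp : carrier -> carrier;
  vscal : R -> carrier -> carrier;
  norm : carrier -> R;
  vadd_assoc : forall x y z, vadd x (vadd y z) = vadd (vadd x y) z;
  vadd_comm : forall x y, vadd x y = vadd y x;
  vadd_0 : forall x, vadd x vzero = x;
  vadd_opp : forall x, vadd x (vopp x) = vzero;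
  vscal_1 : forall x, vscal 1 x = x;
  vscal_assoc : forall a b x, vscal a (vscal b x) = vscal (a * b) x;
  vscal_distr_v : forall a x y, vscal a (vadd x y) = vadd (vscal a x) (vscal a y);
  vscal_distr_s : forall a b x, vscal (a + b) x = vadd (vscal a x) (vscal b x);
  norm_nonneg : forall x, 0 <= norm x;
  norm_eq0 : forall x, norm x = 0 -> x = vzero;
  norm_scal : forall a x, norm (vscal a x) = Rabs a * norm x;
  norm_triangle : forall x y, norm (vadd x y) <= norm x + norm y
}.

Arguments vzero {_}.
Arguments vadd {_} _ _.
Arguments vopp {_} _.
Arguments vscal {_} _ _.
Arguments norm {_} _.

Definition vsub {E : NormedSpace} (x y : E) : E := vadd x (vopp y).

Definition cauchy_seq {E : NormedSpace} (u : nat -> E) : Prop :=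
  forall eps, 0 < eps -> exists N, forall m n, (N <= m)%nat -> (N <= n)%nat ->
    norm (vsub (u m) (u n)) < eps.

Definition converges_to {E : NormedSpace} (u : nat -> E) (l : E) : Prop :=
  forall eps, 0 < eps -> exists N, forall n, (N <= n)%nat -> norm (vsub (u n) l) < eps.

Definition complete (E : NormedSpace) : Prop :=
  forall u : nat -> E, cauchy_seq u -> exists l, converges_to u l.

Definition separable (E : NormedSpace) : Prop :=
  exists d : nat -> E, forall x eps, 0 < eps -> exists n, norm (vsub x (d n)) < eps.

Definition is_linear {E F : NormedSpace} (f : E -> F) : Prop :=
  (forall x y, f (vadd x y) = vadd (f x) (f y)) /\
  (forall a x, f (vscal a x) = vscal a (f x)).

Definition is_linear_functional {E : NormedSpace} (f : E -> R) : Prop :=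
  (forall x y, f (vadd x y) = f x + f y) /\
  (forall a x, f (vscal a x) = a * f x).

Definition in_dual {E : NormedSpace} (lam : E -> R) : Prop :=
  is_linear_functional lam /\ exists C, forall x, Rabs (lam x) <= C * norm x.

Definition dual_norm_is {E : NormedSpace} (lam : E -> R) (r : R) : Prop :=
  is_lub (fun t => exists y : E, norm y <= 1 /\ t = Rabs (lam y)) r.

Definition linear_isometric_automorphism {E : NormedSpace} (g : E -> E) : Prop :=
  is_linear g /\ (forall x, norm (g x) = norm x) /\
  (forall x y, g x = g y -> x = y) /\ (forall y, exists x, g x = y).

Definition norms {E : NormedSpace} (lam : E -> R) (x : E) : Prop :=
  dual_norm_is lam 1 /\ norm x = 1 /\ lam x = 1.

(* Main.v *)
Require Import Defs.
From Stdlib Require Import Reals.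
From Stdlib Require Import Lra Lia ClassicalEpsilon Classical ZArith.
Open Scope R_scope.

Lemma Inf_aux1 {T} (f : T -> R) : ((exists m, forall t, m <= f t) /\ inhabited T) ->
  bound (fun y => exists t, y = - f t).
Proof. intros [[m Hm] _]. exists (-m). intros y [t ->]. specialize (Hm t). lra. Qed.

Lemma Inf_aux2 {T} (f : T -> R) : ((exists m, forall t, m <= f t) /\ inhabited T) ->
  exists y, (fun y => exists t, y = - f t) y.
Proof. intros [_ [t]]. exists (- f t), t; reflexivity. Qed.

Definition Inf {T : Type} (f : T -> R) : R :=
  match excluded_middle_informative ((exists m, forall t, m <= f t) /\ inhabited T) with
  | left H => - proj1_sig (completeness _ (Inf_aux1 f H) (Inf_aux2 f H))
  | right _ => 0
  end.

Lemma Inf_le {T} (f : T -> R) : (exists m, forall t, m <= f t) -> forall t, Inf f <= f t.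
Proof.
  intros Hb t. unfold Inf. destruct excluded_middle_informative as [H|H].
  - destruct (completeness _ _ _) as [l [Hub Hl]]. simpl.
    assert (- f t <= l) by (apply Hub; exists t; reflexivity). lra.
  - exfalso. apply H. split; [exact Hb| exact (inhabits t)].
Qed.

Lemma le_Inf {T} (f : T -> R) (t0 : T) m : (forall t, m <= f t) -> m <= Inf f.
Proof.
  intros Hm. unfold Inf; destruct excluded_middle_informative as [H|H].
  - destruct (completeness _ _ _) as [l [Hub Hl]]; simpl.
    assert (l <= -m). { apply Hl. intros y [t ->]. specialize (Hm t). lra. } lra.
  - exfalso; apply H; split; [exists m; exact Hm | exact (inhabits t0)].
Qed.

Section Alg.
Variable E : NormedSpace.
Implicit Types x y z : E.

Lemma vadd_0l x : vadd vzero x = x.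
Proof. rewrite vadd_comm; apply vadd_0. Qed.

Lemma vadd_cancel x y z : vadd x y = vadd x z -> y = z.
Proof.
  intros H.
  assert (H0 : vadd (vopp x) (vadd x y) = vadd (vopp x) (vadd x z)) by now rewrite H.
  rewrite !vadd_assoc, (vadd_comm _ (vopp x) x), vadd_opp, !vadd_0l in H0. exact H0.
Qed.

Lemma vscal0 x : vscal 0 x = vzero.
Proof.
  apply (vadd_cancel (vscal 0 x)). rewrite vadd_0, <- vscal_distr_s, Rplus_0_r. reflexivity.
Qed.

Lemma vscal_z a : vscal a (@vzero E) = vzero.
Proof. rewrite <- (vscal0 vzero), vscal_assoc, Rmult_0_r. reflexivity. Qed.

Lemma vopp_scal x : vopp x = vscal (-1) x.
Proof.
  apply (vadd_cancel x). rewrite vadd_opp. symmetry.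
  replace (vadd x (vscal (-1) x)) with (vscal (1 + -1) x).
  - rewrite Rplus_opp_r. apply vscal0.
  - rewrite vscal_distr_s, vscal_1. reflexivity.
Qed.

Lemma norm_opp x : norm (vopp x) = norm x.
Proof. rewrite vopp_scal, norm_scal. replace (Rabs (-1)) with 1. ring.
  unfold Rabs; destruct Rcase_abs; lra. Qed.

Lemma norm_zero : norm (@vzero E) = 0.
Proof. rewrite <- (vscal0 vzero), norm_scal, Rabs_R0; ring. Qed.

Lemma vadd_sub x (w : E) : vadd (vadd x w) (vopp x) = w.
Proof. rewrite (vadd_comm _ x w), <- vadd_assoc, vadd_opp, vadd_0. reflexivity. Qed.

Lemma vadd_4 (a b c d : E) : vadd (vadd a b) (vadd c d) = vadd (vadd a c) (vadd b d).
Proof.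
  rewrite !vadd_assoc; f_equal; rewrite <- !vadd_assoc; f_equal; apply vadd_comm.
Qed.

Lemma vadd_swap x (a b : E) : vadd (vadd x a) b = vadd (vadd x b) a.
Proof. rewrite <- !vadd_assoc, (vadd_comm _ a b). reflexivity. Qed.

Lemma vsub_eq0 (a b : E) : vsub a b = vzero -> a = b.
Proof.
  unfold vsub; intros H.
  assert (H0 : vadd (vadd a (vopp b)) b = vadd vzero b) by now rewrite H.
  rewrite <- vadd_assoc, (vadd_comm _ (vopp b) b), vadd_opp, vadd_0, vadd_0l in H0. exact H0.
Qed.

Lemma vsub_add x (v : E) : x = vadd (vsub x v) v.
Proof.
  unfold vsub. rewrite <- vadd_assoc, (vadd_comm _ (vopp v) v), vadd_opp, vadd_0. reflexivity.
Qed.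

Lemma vopp_vsub x (v : E) : vsub (vopp x) (vopp v) = vopp (vsub x v).
Proof.
  unfold vsub. rewrite !vopp_scal, vscal_distr_v, vscal_assoc.
  replace (-1 * -1) with 1 by ring. reflexivity.
Qed.

Definition sublin (p : E -> R) : Prop :=
  (forall x y, p (vadd x y) <= p x + p y) /\
  (forall a x, 0 <= a -> p (vscal a x) = a * p x) /\
  (forall x, p x <= norm x).

Lemma sublin_0 p : sublin p -> p vzero = 0.
Proof. intros [_ [Hh _]]. rewrite <- (vscal0 vzero), Hh; lra. Qed.

Lemma sublin_opp p x : sublin p -> 0 <= p x + p (vopp x).
Proof.
  intros Hp. pose proof (sublin_0 p Hp) as H0. destruct Hp as [Ha _].
  specialize (Ha x (vopp x)). rewrite vadd_opp in Ha. lra.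
Qed.

Lemma sublin_lb p x : sublin p -> - norm x <= p x.
Proof.
  intros Hp. pose proof (sublin_opp p x Hp). destruct Hp as [_ [_ Hn]].
  specialize (Hn (vopp x)). rewrite norm_opp in Hn. lra.
Qed.

Definition step (p : E -> R) (e : E) (x : E) : R :=
  Inf (fun t : R => p (vadd x (vscal t e)) - t * p e).

Lemma step_lb p e : sublin p -> forall x t, - p (vopp x) <= p (vadd x (vscal t e)) - t * p e.
Proof.
  intros Hp x t.
  pose proof (sublin_opp p e Hp) as Ho.
  destruct Hp as [Ha [Hh Hn]].
  assert (H1 : p (vscal t e) <= p (vadd x (vscal t e)) + p (vopp x)).
  { rewrite <- (vadd_sub x (vscal t e)) at 1. apply Ha. }
  destruct (Rle_lt_dec 0 t) as [Ht|Ht].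
  - rewrite Hh in H1 by exact Ht. lra.
  - assert (Hs : p (vscal t e) = -t * p (vopp e)).
    { rewrite <- Hh by lra. rewrite vopp_scal, vscal_assoc. f_equal. f_equal. ring. }
    rewrite Hs in H1. nra.
Qed.

Lemma step_bnd p e x : sublin p -> exists m, forall t, m <= p (vadd x (vscal t e)) - t * p e.
Proof. intros Hp. exists (- p (vopp x)). apply step_lb; auto. Qed.

Lemma step_ge p e x : sublin p -> - p (vopp x) <= step p e x.
Proof. intros Hp. apply (le_Inf _ 0). apply step_lb; auto. Qed.

Lemma step_le p e x : sublin p -> step p e x <= p x.
Proof.
  intros Hp. unfold step.
  eapply Rle_trans. apply (Inf_le _ (step_bnd p e x Hp) 0).
  rewrite vscal0, vadd_0. lra.
Qed.

Lemma step_sublin p e : sublin p -> sublin (step p e).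
Proof.
  intros Hp. pose proof Hp as [Ha [Hh Hn]]. split; [|split].
  - intros x y.
    assert (H : forall t s, step p e (vadd x y) <=
       (p (vadd x (vscal t e)) - t * p e) + (p (vadd y (vscal s e)) - s * p e)).
    { intros t s. eapply Rle_trans. apply (Inf_le _ (step_bnd p e _ Hp) (t + s)).
      rewrite vscal_distr_s, vadd_4.
      specialize (Ha (vadd x (vscal t e)) (vadd y (vscal s e))). lra. }
    assert (H2 : forall t, step p e (vadd x y) - (p (vadd x (vscal t e)) - t * p e) <= step p e y).
    { intros t. apply (le_Inf _ 0). intros s. specialize (H t s). lra. }
    assert (H3 : step p e (vadd x y) - step p e y <= step p e x).
    { apply (le_Inf _ 0). intros t. specialize (H2 t). lra. }
    lra.
  - intros a x Ha0. destruct (Req_dec a 0) as [->|Hna].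
    + rewrite vscal0, Rmult_0_l.
      apply Rle_antisym.
      * eapply Rle_trans. apply step_le; auto. rewrite (sublin_0 p Hp). lra.
      * eapply Rle_trans; [|apply step_ge; auto]. rewrite vopp_scal, vscal_z, (sublin_0 p Hp). lra.
    + assert (Hapos : 0 < a) by lra.
      apply Rle_antisym.
      * assert (H : step p e (vscal a x) / a <= step p e x).
        { apply (le_Inf _ 0). intros s.
          assert (H1 : step p e (vscal a x) <= a * (p (vadd x (vscal s e)) - s * p e)).
          { eapply Rle_trans. apply (Inf_le _ (step_bnd p e _ Hp) (a * s)).
            rewrite <- vscal_assoc, <- vscal_distr_v, Hh by lra. lra. }
          apply Rmult_le_reg_l with a; [lra|].
          replace (a * (step p e (vscal a x) / a)) with (step p e (vscal a x)) by (field; lra).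
          lra. }
        replace (step p e (vscal a x)) with (a * (step p e (vscal a x) / a)) by (field; lra).
        apply Rmult_le_compat_l; lra.
      * apply (le_Inf _ 0). intros t.
        assert (H1 : step p e x <= p (vadd x (vscal (t / a) e)) - (t / a) * p e).
        { apply (Inf_le _ (step_bnd p e _ Hp)). }
        replace (vadd (vscal a x) (vscal t e)) with (vscal a (vadd x (vscal (t / a) e))).
        -- rewrite Hh by lra.
           replace (t * p e) with (a * ((t / a) * p e)) by (field; lra).
           rewrite <- Rmult_minus_distr_l. apply Rmult_le_compat_l; lra.
        -- rewrite vscal_distr_v, vscal_assoc. f_equal. f_equal. field. lra.
  - intros x. eapply Rle_trans. apply step_le; auto. apply Hn.
Qed.

Lemma step_trans p e : sublin p -> forall x s,
  step p e (vadd x (vscal s e)) = step p e x + s * p e.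
Proof.
  intros Hp x s. apply Rle_antisym.
  - assert (H : step p e (vadd x (vscal s e)) - s * p e <= step p e x).
    { apply (le_Inf _ 0). intros t.
      assert (H1 := Inf_le _ (step_bnd p e (vadd x (vscal s e)) Hp) (t - s)).
      simpl in H1.
      rewrite <- vadd_assoc, <- vscal_distr_s in H1.
      replace (s + (t - s)) with t in H1 by ring. unfold step. lra. }
    lra.
  - assert (H : step p e x + s * p e <= step p e (vadd x (vscal s e))).
    { apply (le_Inf _ 0). intros t.
      assert (H1 := Inf_le _ (step_bnd p e x Hp) (s + t)). simpl in H1.
      rewrite <- vadd_assoc, <- vscal_distr_s. unfold step. lra. }
    lra.
Qed.

Lemma step_pres p e e' c : sublin p ->
  (forall x s, p (vadd x (vscal s e')) = p x + s * c) ->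
  forall x s, step p e (vadd x (vscal s e')) = step p e x + s * c.
Proof.
  intros Hp Ht x s. apply Rle_antisym.
  - assert (H : step p e (vadd x (vscal s e')) - s * c <= step p e x).
    { apply (le_Inf _ 0). intros t.
      assert (H1 := Inf_le _ (step_bnd p e (vadd x (vscal s e')) Hp) t).
      simpl in H1. rewrite vadd_swap, Ht in H1. unfold step. lra. }
    lra.
  - assert (H : step p e x + s * c <= step p e (vadd x (vscal s e'))).
    { apply (le_Inf _ 0). intros t.
      assert (H1 := Inf_le _ (step_bnd p e x Hp) t). simpl in H1.
      rewrite vadd_swap, Ht. unfold step. lra. }
    lra.
Qed.

Lemma norm_sublin : sublin norm.
Proof.
  split; [|split].
  - apply norm_triangle.
  - intros a x Ha. rewrite norm_scal, Rabs_pos_eq; auto.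
  - intros; lra.
Qed.

Section Seq.
Variable dirs : nat -> E.

Fixpoint P (n : nat) : E -> R :=
  match n with 0 => norm | S n => step (P n) (dirs n) end.

Lemma P_sublin n : sublin (P n).
Proof. induction n; simpl. apply norm_sublin. apply step_sublin; auto. Qed.

Lemma P_mono n m : (n <= m)%nat -> forall x, P m x <= P n x.
Proof.
  intros Hnm. induction Hnm; intros x. lra.
  simpl. eapply Rle_trans. apply step_le, P_sublin. apply IHHnm.
Qed.

Lemma P_trans k n : (k < n)%nat -> forall x s,
  P n (vadd x (vscal s (dirs k))) = P n x + s * P k (dirs k).
Proof.
  intros Hkn. induction Hkn; intros x s; simpl.
  - apply step_trans, P_sublin.
  - apply step_pres. apply P_sublin. apply IHHkn.
Qed.

Lemma P_bnd x : exists m, forall n, m <= P n x.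
Proof. exists (- norm x). intros n. apply sublin_lb, P_sublin. Qed.

Definition Lam (x : E) : R := Inf (fun n => P n x).

Lemma Lam_le n x : Lam x <= P n x.
Proof. apply (Inf_le _ (P_bnd x)). Qed.

Lemma Lam_trans k : forall x s, Lam (vadd x (vscal s (dirs k))) = Lam x + s * P k (dirs k).
Proof.
  intros x s. apply Rle_antisym.
  - assert (H : Lam (vadd x (vscal s (dirs k))) - s * P k (dirs k) <= Lam x).
    { apply (le_Inf _ 0%nat). intros n.
      pose proof (Lam_le (max n (S k)) (vadd x (vscal s (dirs k)))) as H1.
      rewrite P_trans in H1 by lia.
      pose proof (P_mono n (max n (S k)) ltac:(lia) x). lra. }
    lra.
  - assert (H : Lam x + s * P k (dirs k) <= Lam (vadd x (vscal s (dirs k)))).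
    { apply (le_Inf _ 0%nat). intros n.
      pose proof (Lam_le (max n (S k)) x) as H1.
      pose proof (P_trans k (max n (S k)) ltac:(lia) x s) as H2.
      pose proof (P_mono n (max n (S k)) ltac:(lia) (vadd x (vscal s (dirs k)))). lra. }
    lra.
Qed.

Lemma Lam_zero : Lam vzero = 0.
Proof.
  apply Rle_antisym.
  - pose proof (Lam_le 0 vzero). simpl in H. rewrite norm_zero in H. lra.
  - apply (le_Inf _ 0%nat). intros n. rewrite sublin_0 by apply P_sublin. lra.
Qed.

Lemma Lam_sublin : sublin Lam.
Proof.
  split; [|split].
  - intros x y.
    assert (H : forall n m, Lam (vadd x y) <= P n x + P m y).
    { intros n m. pose proof (Lam_le (max n m) (vadd x y)).
      destruct (P_sublin (max n m)) as [Ha _]. specialize (Ha x y).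
      pose proof (P_mono n (max n m) ltac:(lia) x).
      pose proof (P_mono m (max n m) ltac:(lia) y). lra. }
    assert (H2 : forall n, Lam (vadd x y) - P n x <= Lam y).
    { intros n. apply (le_Inf _ 0%nat). intros m. specialize (H n m). lra. }
    assert (H3 : Lam (vadd x y) - Lam y <= Lam x).
    { apply (le_Inf _ 0%nat). intros n. specialize (H2 n). lra. }
    lra.
  - intros a x Ha0. destruct (Req_dec a 0) as [->|Hna].
    + rewrite vscal0, Lam_zero. ring.
    + apply Rle_antisym.
      * assert (H : Lam (vscal a x) / a <= Lam x).
        { apply (le_Inf _ 0%nat). intros n.
          pose proof (Lam_le n (vscal a x)) as H1.
          destruct (P_sublin n) as [_ [Hh _]]. rewrite Hh in H1 by lra.
          apply Rmult_le_reg_l with a; [lra|].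
          replace (a * (Lam (vscal a x) / a)) with (Lam (vscal a x)) by (field; lra).
          lra. }
        replace (Lam (vscal a x)) with (a * (Lam (vscal a x) / a)) by (field; lra).
        apply Rmult_le_compat_l; lra.
      * apply (le_Inf _ 0%nat). intros n.
        pose proof (Lam_le n x) as H1.
        destruct (P_sublin n) as [_ [Hh _]]. rewrite Hh by lra.
        apply Rmult_le_compat_l; lra.
  - intros x. pose proof (Lam_le 0 x). simpl in H. exact H.
Qed.

End Seq.

Lemma linearize (L : E -> R) : sublin L ->
  (forall x eps, 0 < eps -> exists v, norm (vsub x v) < eps /\ L v + L (vopp v) = 0) ->
  is_linear_functional L /\ forall x, Rabs (L x) <= norm x.
Proof.
  intros HL Hd.
  assert (Hodd : forall x, L (vopp x) = - L x).
  { intros x. pose proof (sublin_opp L x HL) as H0.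
    destruct HL as [Ha [Hh Hn]].
    assert (H1 : forall eps, 0 < eps -> L x + L (vopp x) <= 2 * eps).
    { intros eps He. destruct (Hd x eps He) as [v [Hv Hv0]].
      pose proof (Ha (vsub x v) v) as A1. rewrite <- vsub_add in A1.
      pose proof (Ha (vsub (vopp x) (vopp v)) (vopp v)) as A2. rewrite <- vsub_add in A2.
      rewrite vopp_vsub in A2.
      pose proof (Hn (vsub x v)). pose proof (Hn (vopp (vsub x v))) as A3.
      rewrite norm_opp in A3. lra. }
    destruct (Rle_lt_dec (L x + L (vopp x)) 0) as [Hle|Hlt].
    - lra.
    - specialize (H1 ((L x + L (vopp x)) / 4) ltac:(lra)). lra. }
  destruct HL as [Ha [Hh Hn]].
  split; [split|].
  - intros x y. apply Rle_antisym. apply Ha.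
    pose proof (Ha (vopp x) (vopp y)) as H1.
    replace (vadd (vopp x) (vopp y)) with (vopp (vadd x y)) in H1.
    + rewrite !Hodd in H1. lra.
    + rewrite !vopp_scal, vscal_distr_v. reflexivity.
  - intros a x. destruct (Rle_lt_dec 0 a) as [Ha0|Ha0].
    + apply Hh; auto.
    + replace (vscal a x) with (vopp (vscal (-a) x)).
      * rewrite Hodd, Hh by lra. ring.
      * rewrite vopp_scal, vscal_assoc. f_equal. ring.
  - intros x. apply Rabs_le. split.
    + pose proof (Hn (vopp x)). rewrite Hodd, norm_opp in H. lra.
    + apply Hn.
Qed.

Lemma hahn_banach (HS : separable E) (u : E) : norm u = 1 ->
  exists lam : E -> R, is_linear_functional lam /\ (forall x, Rabs (lam x) <= norm x) /\ lam u = 1.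
Proof.
  intros Hu. destruct HS as [d Hd].
  set (dirs := fun n => match n with 0%nat => u | S k => d k end).
  exists (Lam dirs).
  destruct (linearize (Lam dirs) (Lam_sublin dirs)) as [Hlin Hb].
  - intros x eps He. destruct (Hd x eps He) as [n Hn]. exists (d n). split; auto.
    pose proof (Lam_trans dirs (S n) vzero 1) as H1.
    pose proof (Lam_trans dirs (S n) vzero (-1)) as H2.
    simpl in H1, H2. rewrite vadd_0l, vscal_1, Lam_zero in H1.
    rewrite vadd_0l, Lam_zero, <- vopp_scal in H2. lra.
  - split; [exact Hlin|split; [exact Hb|]].
    pose proof (Lam_trans dirs 0 vzero 1) as H1. simpl in H1.
    rewrite vadd_0l, vscal_1, Lam_zero, Hu in H1. lra.
Qed.

End Alg.

Fixpoint itr {T : Type} (g : T -> T) (n : nat) (x : T) : T :=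
  match n with 0%nat => x | S k => g (itr g k x) end.

Lemma itr_succ_r {T} (g : T -> T) n x : itr g n (g x) = itr g (S n) x.
Proof. induction n; simpl; auto. rewrite IHn. reflexivity. Qed.

Lemma Rabs_le_between (a b : R) : Rabs a <= b -> -b <= a <= b.
Proof. intros H. pose proof (Rle_abs a). pose proof (Rle_abs (-a)).
  rewrite Rabs_Ropp in H1. lra. Qed.

Lemma unbounded (r : R) : exists N : nat, r < INR N.
Proof.
  destruct (Rlt_le_dec r 0) as [H|H].
  - exists 0%nat. simpl. lra.
  - destruct (archimed r) as [H1 _].
    assert (Hz : (0 <= up r)%Z). { apply le_IZR. lra. }
    exists (Z.to_nat (up r)). rewrite INR_IZR_INZ, Z2Nat.id by exact Hz. lra.
Qed.

Lemma dual_one (E : NormedSpace) (lam : E -> R) u :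
  (forall x, Rabs (lam x) <= norm x) -> norm u = 1 -> lam u = 1 -> dual_norm_is lam 1.
Proof.
  intros Hb Hu Hl. split.
  - intros t [y [Hy ->]]. specialize (Hb y). lra.
  - intros b Hub. apply Hub. exists u. split. lra. rewrite Hl, Rabs_R1. reflexivity.
Qed.

Theorem lemma4p4 (E : NormedSpace) (HB : complete E) (HS : separable E)
  (g : E -> E) (Hg : linear_isometric_automorphism g)
  (Hneq : ~ (forall x, g x = x)) :
  exists (x : E) (lam : E -> R),
    in_dual lam /\ norms lam x /\ ~ norms lam (g x) /\
    dual_norm_is lam 1 /\ norm x = 1 /\ lam x = 1 /\ lam (g x) < 1.
Proof.
  destruct Hg as [[Hadd Hsc] [Hnorm [Hinj Hsurj]]].
  apply NNPP; intro Hno.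
  apply Hneq. intro x0. apply NNPP; intro Hx0.
  set (z := vsub (g x0) x0).
  assert (Hz : norm z <> 0).
  { intro H0. apply Hx0. apply norm_eq0 in H0. apply vsub_eq0 in H0. exact H0. }
  assert (Hzp : 0 < norm z) by (pose proof (norm_nonneg _ z); lra).
  set (u := vscal (/ norm z) z).
  assert (Hu : norm u = 1).
  { unfold u. rewrite norm_scal, Rabs_pos_eq. field; lra.
    apply Rlt_le, Rinv_0_lt_compat; lra. }
  destruct (hahn_banach E HS u Hu) as [lam [[Ladd Lsc] [Lb Lu]]].
  assert (Hitn : forall n x, norm (itr g n x) = norm x).
  { induction n; intros x; simpl; auto. rewrite Hnorm; auto. }
  assert (Hits : forall n a x, itr g n (vscal a x) = vscal a (itr g n x)).
  { induction n; intros a x; simpl; auto. rewrite IHn, Hsc. reflexivity. }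
  assert (Hita : forall n x y, itr g n (vadd x y) = vadd (itr g n x) (itr g n y)).
  { induction n; intros x y; simpl; auto. rewrite IHn, Hadd. reflexivity. }
  assert (Hall : forall n, lam (itr g n u) = 1).
  { induction n. simpl; exact Lu.
    destruct (Rlt_dec (lam (itr g (S n) u)) 1) as [Hlt|Hge].
    - exfalso; apply Hno. exists (itr g n u), lam. simpl in Hlt |- *.
      assert (Hd : dual_norm_is lam 1) by (apply (dual_one E lam u); auto).
      assert (Hin : in_dual lam).
      { split; [split; assumption|]. exists 1. intros x. rewrite Rmult_1_l. apply Lb. }
      assert (Hnx : norm (itr g n u) = 1) by (rewrite Hitn; auto).
      split; [exact Hin|]. split; [split; [exact Hd| split; auto]|].
      split; [intros [_ [_ H]]; lra|]. split; [exact Hd|]. split; auto.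
    - pose proof (Lb (itr g (S n) u)) as H. rewrite Hitn, Hu in H.
      apply Rabs_le_between in H. lra. }
  assert (Hlopp : forall w, lam (vopp w) = - lam w).
  { intros w. rewrite vopp_scal, Lsc. ring. }
  assert (Htel : forall N, lam (itr g N x0) = lam x0 + INR N * norm z).
  { induction N. simpl; ring.
    assert (Hzu : z = vscal (norm z) u).
    { unfold u. rewrite vscal_assoc, Rinv_r, vscal_1 by exact Hz. reflexivity. }
    assert (H1 : lam (itr g N z) = norm z).
    { rewrite Hzu at 1. rewrite Hits, Lsc, Hall. ring. }
    assert (H2 : itr g N z = vadd (itr g (S N) x0) (vscal (-1) (itr g N x0))).
    { unfold z, vsub. rewrite Hita, vopp_scal, Hits, itr_succ_r. reflexivity. }
    rewrite H2, Ladd, Lsc in H1.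
    rewrite S_INR. lra. }
  destruct (unbounded (2 * norm x0 / norm z)) as [N HN].
  specialize (Htel N).
  pose proof (Lb x0) as B1. pose proof (Lb (itr g N x0)) as B2.
  rewrite Hitn in B2.
  apply Rabs_le_between in B1. apply Rabs_le_between in B2.
  assert (2 * norm x0 < INR N * norm z).
  { apply Rmult_lt_compat_r with (r := norm z) in HN; auto.
    unfold Rdiv in HN. rewrite Rmult_assoc, Rinv_l in HN by exact Hz. lra. }
  lra.
Qed.
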